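(* Let $t=0$ (so $A:L^2(\Gamma)\to L^2(\Gamma)$ with $\langle Av,v\rangle\ge\alpha\|v\|^2$ and $\|Av\|\le\beta\|v\|$), let $f\in L^2(\Gamma)$, and for $Q\in[P_0]$ let $u_Q\in S^0_Q$ be the Galerkin approximation of $u=A^{-1}f$ from $S^0_Q$ and $r_Q=f-Au_Q$. Let $P,P'\in[P_0]$ with $P\preceq P'$, and let $\Gamma^*=\mathrm{int}\bigcup_{\tau\in P\setminus P'}\overline\tau$. Then for every $v\in S^0_{P'}$, \[ \alpha\|u_P-u_{P'}\|\le\|r_P\|_{\Gamma^*}\le\beta\|u_P-u_{P'}\|+2\|r_P-v\|_{\Gamma^*}. \]
   Context: $\Omega$ is a compact closed $n$-dimensional manifold, globally $C^{\nu-1,1}$ and patchwise smooth (each smooth closed patch diffeomorphic to a polygon), and $\Gamma\subseteq\Omega$ is either $\Omega$ or a connected open subset of $\Omega$ whose boundary consists of curved polygons. $\|\cdot\|$ and $\|\cdot\|_\omega$ are the $L^2(\Gamma)$- and $L^2(\omega)$-norms, $\langle\cdot,\cdot\rangle$ the $L^2(\Gamma)$ inner product. $A:L^2(\Gamma)\to L^2(\Gamma)$ is a self-adjoint bounded linear bijection with constants $\alpha,\beta>0$ as in the claim. For a closed subspace $S$, the Galerkin approximation $u_S\in S$ is defined by $\langle Au_S,w\rangle=\langle f,w\rangle$ for all $w\in S$. A surface triangle is an open subset of $\Gamma$ whose closure is diffeomorphic to a flat triangle (its reference; polynomials, midpoints etc. are understood through the reference). A partition of $\Gamma$ is a finite set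 of pairwise disjoint surface triangles whose closures cover $\overline\Gamma$. Each triangle has a newest vertex; refining it means bisecting it by joining the newest vertex to the midpoint of the opposite edge, the two children inheriting the reference and having this midpoint as newest vertex. $P\preceq P'$ means $P'$ is obtained from $P$ by recursively replacing triangles by their children. $P_0$ is a fixed conforming partition and $[P_0]$ is the set of all its refinements. $S^0_P$ is the space of functions that are constant on each $\tau\in P$. $\mathrm{int}$ denotes the interior. *)

(* Defs.v *)
From HB Require Import structures.
From mathcomp Require Import all_boot all_order all_algebra.
From mathcomp Require Import all_classical all_reals all_analysis.

Set Implicit Arguments.
Unset Strict Implicit.
Unset Printing Implicit Defensive.

Import Order.TTheory GRing.Theory Num.Theory.
Local Open Scope classical_set_scope.
Local Open Scope ring_scope.

HB.structure Definition TopMeasurable d :=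
  {T of Topological T & Measurable d T}.
Notation topMeasurableType := TopMeasurable.type.

Section L2defs.
Context {d : measure_display} {T : topMeasurableType d} {R : realType}.
Variable mu : {measure set T -> \bar R}.

(* v is (a representative of) an element of L^2(Gamma). *)
Definition L2 (v : T -> R) : Prop :=
  measurable_fun setT v /\ (\int[mu]_x ((v x) ^+ 2)%:E < +oo)%E.

Definition ip (v w : T -> R) : R := Rintegral mu setT (fun x => v x * w x).

Definition normL2 (omega : set T) (v : T -> R) : R :=
  Num.sqrt (Rintegral mu omega (fun x => (v x) ^+ 2)).

(* equality almost everywhere, i.e. equality in L^2(Gamma) *)
Definition aeeq (v w : T -> R) : Prop := {ae mu, forall x, v x = w x}.

Definition S0 (Tri : eqType) (cell : Tri -> set T) (P : seq Tri) (v : T -> R)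
  : Prop :=
  L2 v /\ forall t, t \in P -> exists c : R, forall x, cell t x -> v x = c.

End L2defs.

(* P <= P' : P' is obtained from P by recursively replacing triangles by
   their two children (newest vertex bisection: ch1 t, ch2 t). *)
Inductive refines (Tri : eqType) (ch1 ch2 : Tri -> Tri) : seq Tri -> seq Tri -> Prop :=
| refines_refl P : refines ch1 ch2 P P
| refines_step P P' t : refines ch1 ch2 P P' -> t \in P' ->
    refines ch1 ch2 P (ch1 t :: ch2 t :: rem t P').

Definition Gamma_star (T : topologicalType) (Tri : eqType) (cell : Tri -> set T)
  (P P' : seq Tri) : set T :=
  interior [set x | exists2 t, (t \in P) && (t \notin P') & closure (cell t) x].

Definition is_partition (T : topologicalType) (Tri : eqType) (cell : Tri -> set T)
  (P : seq Tri) : Prop :=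
  uniq P /\
  (forall t s, t \in P -> s \in P -> t != s -> cell t `&` cell s = set0) /\
  (forall x, exists2 t, t \in P & closure (cell t) x).

(* Main.v *)
Require Import Defs.
From HB Require Import structures.
From mathcomp Require Import all_boot all_order all_algebra.
From mathcomp Require Import all_classical all_reals all_analysis.
From mathcomp Require Import ring lra measurable_realfun.
Import Order.TTheory GRing.Theory Num.Theory.
Local Open Scope classical_set_scope.

Section C.
Context {T : topologicalType} {Tri : eqType} (cell : Tri -> set T) (ch1 ch2 : Tri -> Tri).
Hypothesis ch_sub1 : forall t, cell (ch1 t) `<=` cell t.
Hypothesis ch_sub2 : forall t, cell (ch2 t) `<=` cell t.
Hypothesis ch_disj : forall t, cell (ch1 t) `&` cell (ch2 t) = set0.

Definition Inv (P : seq Tri) :=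
  (forall a b, a \in P -> b \in P -> a != b -> cell a `&` cell b = set0) /\
  (forall a, (1 < count_mem a P)%N -> cell a = set0).

Lemma inv_P0 P : is_partition cell P -> Inv P.
Proof.
case=> u [dj _]; split => // a; rewrite count_uniq_mem //.
by case: (a \in P).
Qed.

Lemma count_remE {P : seq Tri} {t} a : t \in P ->
  count_mem a P = ((t == a) + count_mem a (rem t P))%N.
Proof. by move=> tP; move/permP: (perm_to_rem tP) => ->. Qed.

Lemma sub0 {A B : set T} : A `<=` B -> B = set0 -> A = set0.
Proof. by move=> AB B0; apply/seteqP; split => // x /AB; rewrite B0. Qed.

Lemma child_cases (P : seq Tri) t a : a \in ch1 t :: ch2 t :: rem t P ->
  [\/ a = ch1 t, a = ch2 t | a \in rem t P].
Proof. by rewrite !in_cons => /orP[/eqP->|/orP[/eqP->|]]; [constructor 1|constructor 2|constructor 3]. Qed.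

Lemma child_sub {t a} : a = ch1 t \/ a = ch2 t -> cell a `<=` cell t.
Proof. by case=> ->. Qed.

Lemma inv_step P t : Inv P -> t \in P -> Inv (ch1 t :: ch2 t :: rem t P).
Proof.
move=> [dj cnt] tP.
have remP a : a \in rem t P -> a \in P by move/mem_rem.
have tdup : t \in rem t P -> cell t = set0.
  move=> tr; apply: cnt; rewrite (count_remE t tP) eqxx.
  have : (0 < count_mem t (rem t P))%N by rewrite -has_count has_pred1.
  by rewrite add1n ltnS.
have cr c b : c = ch1 t \/ c = ch2 t -> b \in rem t P -> cell c `&` cell b = set0.
  move=> hc br; have [bt|bt] := eqVneq b t.
    rewrite bt in br *; apply: (sub0 (B := cell t)); first by move=> x [_ xt].
    exact: tdup.
  apply: (sub0 (B := cell t `&` cell b)); first by move=> x [/(child_sub hc) ? ?].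
  by apply: dj => //; [exact: remP|rewrite eq_sym].
split.
- move=> a b /child_cases ha /child_cases hb ab.
  case: ha => [ea|ea|ar]; case: hb => [eb|eb|br].
  + by move: ab; rewrite ea eb eqxx.
  + by rewrite ea eb.
  + by apply: cr => //; left.
  + by rewrite ea eb setIC.
  + by move: ab; rewrite ea eb eqxx.
  + by apply: cr => //; right.
  + by rewrite setIC; apply: cr => //; left.
  + by rewrite setIC; apply: cr => //; right.
  + by apply: dj => //; exact: remP.
- move=> a /=; have [ra|ra] := leqP 2 (count_mem a (rem t P)).
    move=> _; apply: cnt; rewrite (count_remE a tP).
    by apply: leq_trans ra _; rewrite leq_addl.
  have [e1|n1] := eqVneq (ch1 t) a; have [e2|n2] := eqVneq (ch2 t) a.
  + by move=> _; rewrite -(ch_disj t) e1 e2 setIid.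
  + rewrite /= add0n add1n ltnS => r1.
    have ar : a \in rem t P by rewrite -has_pred1 has_count.
    by have := cr a a (or_introl (esym e1)) ar; rewrite setIid.
  + rewrite /= add1n add0n ltnS => r1.
    have ar : a \in rem t P by rewrite -has_pred1 has_count.
    by have := cr a a (or_intror (esym e2)) ar; rewrite setIid.
  + by rewrite /= !add0n => /(leq_trans ra); rewrite ltnn.
Qed.

Lemma inv_ref P P' : refines ch1 ch2 P P' -> Inv P -> Inv P'.
Proof. by elim=> // Q Q' t _ IH tQ /IH H; apply: inv_step. Qed.

Lemma sub_ref P P' : refines ch1 ch2 P P' ->
  forall a, a \in P' -> exists2 b, b \in P & cell a `<=` cell b.
Proof.
elim=> [Q a aQ|Q Q' t _ IH tQ a /child_cases ha]; first by exists a.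
case: ha => [ea|ea|ar].
- by have [b bQ sb] := IH t tQ; exists b => //; rewrite ea; apply: subset_trans sb.
- by have [b bQ sb] := IH t tQ; exists b => //; rewrite ea; apply: subset_trans sb.
- exact: IH (mem_rem ar).
Qed.


Hypothesis cell_open : forall t, open (cell t).

Lemma cell_in_Gs (P P' : seq Tri) t : t \in P -> t \notin P' ->
  cell t `<=` Gamma_star cell P P'.
Proof.
move=> tP tP' x xt; rewrite /Gamma_star /interior /=.
apply: (@filterS _ _ _ (cell t)).
  by move=> y yt; exists t; [rewrite tP tP'|exact: subset_closure].
exact: open_nbhs_nbhs.
Qed.

Lemma cell_out_Gs (P P' : seq Tri) s x : Inv P -> s \in P -> s \in P' ->
  cell s x -> ~ Gamma_star cell P P' x.
Proof.
move=> [dj _] sP sP' xs /interior_subset [t /andP[tP tP'] cl].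
have st : s != t by apply: contraNneq tP' => <-.
have [y [yt ys]] := cl (cell s) (open_nbhs_nbhs (conj (cell_open s) xs)).
by have := dj _ _ sP tP st; rewrite setIC => e; have : (cell t `&` cell s) y by []; rewrite e.
Qed.

End C.
Arguments inv_ref {T Tri cell ch1 ch2} _ _ _ {P P'}.
Arguments inv_P0 {T Tri cell P}.
Arguments sub_ref {T Tri cell ch1 ch2} _ _ {P P'} _ {a}.
Arguments cell_in_Gs {T Tri cell} _ {P P' t}.
Arguments cell_out_Gs {T Tri cell} _ {P P' s x}.

Local Open Scope ring_scope.

Section H.
Context {d : measure_display} {T : topMeasurableType d} {R : realType}.
Implicit Types (f g h : T -> R) (D : set T) (a : R).
Variable mu : {measure set T -> \bar R}.

Definition Int (D : set T) (f : T -> R) := mu.-integrable D (EFin \o f).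

Lemma L2_int {g} : L2 mu g -> Int setT (fun x => g x ^+ 2).
Proof.
case=> mg fin; apply/integrableP; split.
  by apply/measurable_EFinP; exact: measurable_funX.
rewrite (le_lt_trans _ fin)// le_eqVlt; apply/orP; left; apply/eqP.
by apply: eq_integral => x _ /=; rewrite ger0_norm// sqr_ge0.
Qed.

Lemma L2_of_int g : measurable_fun setT g -> Int setT (fun x => g x ^+ 2) -> L2 mu g.
Proof.
move=> mg /integrableP[_ fin]; split=> //.
rewrite (le_lt_trans _ fin)// le_eqVlt; apply/orP; left; apply/eqP.
by apply: eq_integral => x _ /=; rewrite ger0_norm// sqr_ge0.
Qed.

Lemma Int_dom {D f g} : measurable D -> measurable_fun D f -> Int D g ->
  (forall x, D x -> `|f x| <= `|g x|) -> Int D f.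
Proof.
move=> mD mf ig fg; apply: (le_integrable mD _ _ ig).
  by apply/measurable_EFinP.
by move=> x Dx /=; rewrite lee_fin; exact: fg.
Qed.

Lemma Int_lin {D} a {f g} : measurable D -> Int D f -> Int D g ->
  Int D (fun x => a * f x + g x).
Proof.
move=> mD iF iG; have := integrableD mD (integrableZl mD a iF) iG.
by apply: eq_integrable => // x _ /=; rewrite EFinD EFinM.
Qed.

Lemma Int_S D f : measurable D -> Int setT f -> Int D f.
Proof. by move=> mD; apply: integrableS. Qed.

Lemma Rint_lin D a f g : measurable D -> Int D f -> Int D g ->
  Rintegral mu D (fun x => a * f x + g x) = a * Rintegral mu D f + Rintegral mu D g.
Proof.
move=> mD iF iG; rewrite RintegralD//; last first.
  have := integrableZl mD a iF; apply: eq_integrable => // x _ /=; by rewrite EFinM.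
by rewrite RintegralZl.
Qed.

Lemma L2_meas {g} : L2 mu g -> measurable_fun setT g.
Proof. by case. Qed.

Lemma L2_intM {g h} : L2 mu g -> L2 mu h -> Int setT (fun x => g x * h x).
Proof.
move=> Lg Lh; apply: (Int_dom (g := fun x => 1 * g x ^+ 2 + h x ^+ 2)) => //.
- by apply: measurable_funM; apply: L2_meas.
- by apply: Int_lin => //; apply: L2_int.
- move=> x _; rewrite mul1r [X in _ <= X]ger0_norm; last first.
    by apply: addr_ge0; apply: sqr_ge0.
  have [hp|hn] := lerP 0 (g x * h x).
    by rewrite ger0_norm //; nra.
  by rewrite ltr0_norm //; nra.
Qed.

Lemma L2_lin a g h : L2 mu g -> L2 mu h -> L2 mu (fun x => a * g x + h x).
Proof.
move=> Lg Lh; have mgh : measurable_fun setT (fun x => a * g x + h x).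
  apply: measurable_funD => //; last exact: L2_meas.
  by apply: measurable_funM => //; exact: L2_meas.
apply: L2_of_int => //.
apply: (Int_dom (g := fun x => (2 * a ^+ 2) * g x ^+ 2 + 2 * h x ^+ 2)) => //.
- exact: measurable_funX.
- apply: Int_lin => //; last first.
    have := Int_lin 2 measurableT (L2_int Lh) (@integrable0 _ _ _ mu setT).
    by apply: eq_integrable => // x _ /=; rewrite addr0.
  exact: L2_int.
- move=> x _; rewrite !ger0_norm; first by rewrite -subr_ge0 (_ : _ - _ = (a * g x - h x) ^+ 2) ?sqr_ge0 //; ring.
  + by apply: addr_ge0; apply: mulr_ge0 => //; nra.
  + exact: sqr_ge0.
Qed.

Lemma L2_dom {g h} : L2 mu g -> measurable_fun setT h ->
  (forall x, `|h x| <= `|g x|) -> L2 mu h.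
Proof.
move=> Lg mh hg; apply: L2_of_int => //.
apply: (Int_dom (g := fun x => g x ^+ 2)) => //.
- exact: measurable_funX.
- exact: L2_int.
- move=> x _; rewrite !normrX; apply: lerXn2r; rewrite ?nnegrE ?normr_ge0 //; exact: hg.
Qed.


Lemma CS D g h : measurable D -> Int D (fun x => g x ^+ 2) ->
  Int D (fun x => h x ^+ 2) -> Int D (fun x => g x * h x) ->
  (Rintegral mu D (fun x => g x * h x)) ^+ 2 <=
  Rintegral mu D (fun x => g x ^+ 2) * Rintegral mu D (fun x => h x ^+ 2).
Proof.
move=> mD ig ih igh.
set a := Rintegral mu D (fun x => g x ^+ 2); set b := Rintegral mu D (fun x => g x * h x).
set c := Rintegral mu D (fun x => h x ^+ 2).
have key s : 0 <= s ^+ 2 * a + ((- (2 * s)) * b + c).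
  have := @Rintegral_ge0 _ _ _ mu D (fun x => (s * g x - h x) ^+ 2) (fun x _ => sqr_ge0 _).
  rewrite (@eq_Rintegral _ _ _ mu D
     (fun x => s ^+ 2 * g x ^+ 2 + ((- (2 * s)) * (g x * h x) + h x ^+ 2))); last first.
    by move=> x _; ring.
  rewrite Rint_lin//; last exact: Int_lin.
  by rewrite Rint_lin.
have a0 : 0 <= a by apply: Rintegral_ge0 => x _; exact: sqr_ge0.
have c0 : 0 <= c by apply: Rintegral_ge0 => x _; exact: sqr_ge0.
have [az|ap] := eqVneq a 0.
  rewrite az mul0r.
  have [b0|bn] := eqVneq b 0; first by rewrite b0 expr0n.
  have := key ((c + 1) / (2 * b)).
  rewrite az mulr0 add0r (_ : - (2 * ((c + 1) / (2 * b))) * b + c = -1).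
    by rewrite ler0N1.
  by field.
have apos : 0 < a by rewrite lt_def ap a0.
have := key (b / a).
rewrite (_ : (b / a) ^+ 2 * a + (- (2 * (b / a)) * b + c) = (a * c - b ^+ 2) / a).
  by rewrite pmulr_lge0 ?invr_gt0 // subr_ge0 mulrC.
by field.
Qed.

Lemma CSn {D g h} : measurable D -> Int D (fun x => g x ^+ 2) ->
  Int D (fun x => h x ^+ 2) -> Int D (fun x => g x * h x) ->
  `|Rintegral mu D (fun x => g x * h x)| <= normL2 mu D g * normL2 mu D h.
Proof.
move=> mD ig ih igh; rewrite /normL2 -sqrtrM; last first.
  by apply: Rintegral_ge0 => x _; exact: sqr_ge0.
by rewrite -sqrtr_sqr ler_wsqrtr // CS.
Qed.

Lemma Rint_ae {g1 g2 h} : aeeq mu g1 g2 -> measurable_fun setT g1 ->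
  measurable_fun setT g2 -> measurable_fun setT h ->
  Rintegral mu setT (fun x => g1 x * h x) = Rintegral mu setT (fun x => g2 x * h x).
Proof.
move=> e m1 m2 mh; congr fine; apply: ae_eq_integral => //.
- by apply/measurable_EFinP; exact: measurable_funM.
- by apply/measurable_EFinP; exact: measurable_funM.
by move: e; apply: filterS => x /= -> _.
Qed.


Lemma Rint_restrict D h : Rintegral mu setT (fun x => h x * \1_D x) = Rintegral mu D h.
Proof.
rewrite [RHS]Rintegral_mkcond; apply: eq_Rintegral => x _.
by rewrite patchE indicE; case: (x \in D); rewrite ?mulr1 ?mulr0.
Qed.

Lemma indic01 D x : 0 <= \1_D x :> R /\ \1_D x <= 1 :> R.
Proof. by rewrite indicE; case: (x \in D). Qed.

Lemma L2_ind {D h} : measurable D -> L2 mu h -> L2 mu (fun x => h x * \1_D x).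
Proof.
move=> mD Lh; apply: (L2_dom Lh).
  by apply: measurable_funM; [exact: L2_meas|exact: measurable_indic].
move=> x; rewrite normrM; have [i0 i1] := indic01 D x.
by rewrite (ger0_norm i0) ler_piMr.
Qed.

Lemma L2_indC {D h} : measurable D -> L2 mu h -> L2 mu (fun x => h x * (1 - \1_D x)).
Proof.
move=> mD Lh; apply: (L2_dom Lh).
  apply: measurable_funM; first exact: L2_meas.
  by apply: measurable_funB => //; exact: measurable_indic.
move=> x; rewrite normrM; have [i0 i1] := indic01 D x.
rewrite [X in _ * X <= _]ger0_norm ?subr_ge0 //.
apply: ler_piMr => //; by rewrite lerBlDr lerDl.
Qed.

Lemma Int_L2M {D g h} : measurable D -> L2 mu g -> L2 mu h -> Int D (fun x => g x * h x).
Proof. by move=> mD Lg Lh; apply: Int_S => //; exact: L2_intM. Qed.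

Lemma Int_L2X {D g} : measurable D -> L2 mu g -> Int D (fun x => g x ^+ 2).
Proof. by move=> mD Lg; apply: Int_S => //; exact: L2_int. Qed.

Lemma normL2_sub {D h} : measurable D -> L2 mu h -> normL2 mu D h <= normL2 mu setT h.
Proof.
move=> mD Lh; rewrite /normL2 ler_wsqrtr // -Rint_restrict.
apply: le_Rintegral => //.
- have := L2_int (L2_ind mD Lh); apply: eq_integrable => // x _ /=.
  by rewrite indicE; case: (x \in D); rewrite ?mulr1 ?mulr0 ?expr0n ?mul0r.
- exact: L2_int.
move=> x _; have [i0 i1] := indic01 D x.
by rewrite -[leRHS]mulr1 ler_wpM2l ?sqr_ge0.
Qed.

Lemma normL2_ge0 D h : 0 <= normL2 mu D h.
Proof. exact: sqrtr_ge0. Qed.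

Lemma normL2_sq D h : normL2 mu D h ^+ 2 = Rintegral mu D (fun x => h x ^+ 2).
Proof. by rewrite /normL2 sqr_sqrtr //; apply: Rintegral_ge0 => x _; exact: sqr_ge0. Qed.

End H.

Theorem lemma3p1
  (* the surface piece Gamma with its topology, sigma-algebra, surface measure *)
  (d : measure_display) (T : topMeasurableType d) (R : realType)
  (mu : {measure set T -> \bar R})
  (open_meas : forall U : set T, open U -> measurable U)
  (* surface triangles (with newest vertex), their point sets, and the two
     children produced by newest vertex bisection *)
  (Tri : eqType) (cell : Tri -> set T) (ch1 ch2 : Tri -> Tri)
  (cell_open : forall t, open (cell t))
  (cell_fin : forall t, (mu (cell t) < +oo)%E)
  (cell_bdry_null : forall t, mu (closure (cell t) `\` cell t) = 0%E)
  (ch_sub1 : forall t, cell (ch1 t) `<=` cell t)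
  (ch_sub2 : forall t, cell (ch2 t) `<=` cell t)
  (ch_disj : forall t, cell (ch1 t) `&` cell (ch2 t) = set0)
  (ch_cover : forall t,
      closure (cell (ch1 t)) `|` closure (cell (ch2 t)) = closure (cell t))
  (* the initial partition *)
  (P0 : seq Tri) (HP0 : is_partition cell P0)
  (* the operator A with constants alpha, beta (t = 0) *)
  (A : (T -> R) -> (T -> R)) (alpha beta : R)
  (Halpha : 0 < alpha) (Hbeta : 0 < beta)
  (A_L2 : forall v, L2 mu v -> L2 mu (A v))
  (A_lin : forall (a : R) (v w : T -> R), L2 mu v -> L2 mu w ->
      aeeq mu (A (fun x => a * v x + w x)) (fun x => a * A v x + A w x))
  (A_ae : forall v w, L2 mu v -> L2 mu w -> aeeq mu v w -> aeeq mu (A v) (A w))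
  (A_selfadj : forall v w, L2 mu v -> L2 mu w -> ip mu (A v) w = ip mu v (A w))
  (A_inj : forall v w, L2 mu v -> L2 mu w -> aeeq mu (A v) (A w) -> aeeq mu v w)
  (A_surj : forall g, L2 mu g -> exists2 v, L2 mu v & aeeq mu (A v) g)
  (A_coer : forall v, L2 mu v -> alpha * normL2 mu setT v ^+ 2 <= ip mu (A v) v)
  (A_bnd : forall v, L2 mu v -> normL2 mu setT (A v) <= beta * normL2 mu setT v)
  (* right-hand side *)
  (f : T -> R) (Hf : L2 mu f)
  (* P, P' in [P0] with P <= P' *)
  (P P' : seq Tri) (HP : refines ch1 ch2 P0 P) (HPP' : refines ch1 ch2 P P')
  (* Galerkin approximations u_P, u_P' *)
  (uP uP' : T -> R)
  (HuP : S0 mu cell P uP)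
  (HuP_gal : forall w, S0 mu cell P w -> ip mu (A uP) w = ip mu f w)
  (HuP' : S0 mu cell P' uP')
  (HuP'_gal : forall w, S0 mu cell P' w -> ip mu (A uP') w = ip mu f w)
  (v : T -> R) (Hv : S0 mu cell P' v) :
  let rP := fun x => f x - A uP x in
  let Gs := Gamma_star cell P P' in
  alpha * normL2 mu setT (fun x => uP x - uP' x) <= normL2 mu Gs rP /\
  normL2 mu Gs rP <=
    beta * normL2 mu setT (fun x => uP x - uP' x)
    + 2 * normL2 mu Gs (fun x => rP x - v x).
Proof.
move=> rP Gs.
have mGs : measurable Gs by apply: open_meas; exact: open_interior.
have InvP : Inv cell P.
  by apply: (inv_ref ch_sub1 ch_sub2 ch_disj HP); exact: inv_P0.
have [LuP cuP] := HuP; have [LuP' cuP'] := HuP'; have [Lv cv] := Hv.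
have LAuP := A_L2 _ LuP; have LAuP' := A_L2 _ LuP'.
set e := fun x => uP x - uP' x.
have eE : e = (fun x => -1 * uP' x + uP x) by apply/funext => x; rewrite /e; ring.
have Le : L2 mu e by rewrite eE; exact: L2_lin.
have LrP : L2 mu rP.
  have -> : rP = (fun x => -1 * A uP x + f x) by apply/funext => x; rewrite /rP; ring.
  exact: L2_lin.
have Se : S0 mu cell P' e.
  split => // a aP'; have [b bP sab] := sub_ref ch_sub1 ch_sub2 HPP' aP'.
  have [c1 hc1] := cuP b bP; have [c2 hc2] := cuP' a aP'.
  by exists (c1 - c2) => x xa; rewrite /e hc1 ?hc2 //; exact: sab.
have Aeq : aeeq mu (A e) (fun x => -1 * A uP' x + A uP x) by rewrite eE; exact: A_lin.
have LAe := A_L2 _ Le.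
have ipAe : forall w0, L2 mu w0 -> ip mu (A e) w0 = - ip mu (A uP') w0 + ip mu (A uP) w0.
  move=> w Lw; rewrite /ip (Rint_ae mu Aeq (L2_meas mu LAe) (L2_meas mu (L2_lin mu (-1) _ _ LAuP' LAuP)) (L2_meas mu Lw)).
  rewrite (@eq_Rintegral _ _ _ mu setT
     (fun x => -1 * (A uP' x * w x) + (A uP x * w x))); last by move=> x _; ring.
  by rewrite Rint_lin ?mulN1r //; exact: Int_L2M.
have iprP : forall w0, L2 mu w0 -> ip mu rP w0 = ip mu f w0 - ip mu (A uP) w0.
  move=> w0 Lw; rewrite /ip -RintegralB //; try exact: Int_L2M.
  by apply: eq_Rintegral => x _; rewrite /rP; ring.
split.
- set w := fun x => e x * (1 - \1_Gs x).
  have Sw : S0 mu cell P w.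
    split; first exact: L2_indC.
    move=> t tP; have [tP'|tP'] := boolP (t \in P').
      have [c hc] := Se.2 t tP'; exists c => x xt.
      by rewrite /w hc // indicE memNset ?subr0 ?mulr1 //; exact: (cell_out_Gs cell_open InvP tP tP').
    exists 0 => x xt; rewrite /w indicE mem_set ?subrr ?mulr0 //.
    exact: (cell_in_Gs cell_open tP tP').
  have Lw : L2 mu w := Sw.1.
  have ipw : ip mu rP w = 0 by rewrite (iprP _ Sw.1) (HuP_gal _ Sw) subrr.
  have key1 : ip mu rP e = Rintegral mu Gs (fun x => rP x * e x).
    rewrite -Rint_restrict; transitivity (ip mu rP e - ip mu rP w); first by rewrite ipw subr0.
    rewrite /ip -RintegralB //; try exact: Int_L2M.
    by apply: eq_Rintegral => x _; rewrite /w; ring.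
  have ipAee : ip mu (A e) e = - ip mu rP e.
    by rewrite ipAe // (HuP'_gal _ Se) iprP //; ring.
  have cs := CSn mu mGs (Int_L2X mu mGs LrP) (Int_L2X mu mGs Le) (Int_L2M mu mGs LrP Le).
  have sub := normL2_sub mu mGs Le.
  have coer := A_coer _ Le.
  rewrite ipAee key1 in coer.
  set n := normL2 mu setT e in sub coer *.
  set X := normL2 mu Gs rP in cs *.
  have X0 : 0 <= X by exact: normL2_ge0.
  have n0 : 0 <= n by exact: normL2_ge0.
  have h : alpha * n ^+ 2 <= X * n.
    apply: (le_trans coer); apply: (le_trans (ler_norm _)).
    rewrite normrN; apply: (le_trans cs); exact: ler_wpM2l.
  have [nz|npos] := eqVneq n 0; first by rewrite nz mulr0.
  have np : 0 < n by rewrite lt_def npos n0.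
  by rewrite -(ler_pM2r np) -mulrA -expr2.
- set w2 := fun x => v x * \1_Gs x.
  have Lw2 : L2 mu w2 by exact: L2_ind.
  have Sw2 : S0 mu cell P' w2.
    split => // a aP'; have [b bP sab] := sub_ref ch_sub1 ch_sub2 HPP' aP'.
    have [bP'|bP'] := boolP (b \in P').
      exists 0 => x xa; rewrite /w2 indicE memNset ?mulr0 //.
      exact: (cell_out_Gs cell_open InvP bP bP' (sab x xa)).
    have [c hc] := cv a aP'; exists c => x xa.
    rewrite /w2 hc // indicE mem_set ?mulr1 //.
    exact: (cell_in_Gs cell_open bP bP' x (sab x xa)).
  have ipAw2 : ip mu (A e) w2 = - ip mu rP w2.
    by rewrite ipAe // (HuP'_gal _ Sw2) iprP //; ring.
  set B := Rintegral mu Gs (fun x => rP x * v x).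
  have BE : ip mu rP w2 = B.
    rewrite /B -Rint_restrict /ip; apply: eq_Rintegral => x _; rewrite /w2; ring.
  have nw2 : normL2 mu setT w2 = normL2 mu Gs v.
    rewrite /normL2 -[in RHS]Rint_restrict; congr Num.sqrt; apply: eq_Rintegral => x _.
    by rewrite /w2 indicE; case: (x \in Gs); rewrite ?mulr1 ?mulr0 ?expr0n ?mul0r.
  have csT := CSn mu measurableT (L2_int mu LAe) (L2_int mu Lw2) (L2_intM mu LAe Lw2).
  rewrite -/(ip mu (A e) w2) ipAw2 normrN BE nw2 in csT.
  have bnd := A_bnd _ Le.
  set n := normL2 mu setT e in bnd *.
  set X := normL2 mu Gs rP.
  set Y := normL2 mu Gs v.
  set Dl := normL2 mu Gs (fun x => rP x - v x).
  have X0 : 0 <= X by exact: normL2_ge0.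
  have Y0 : 0 <= Y by exact: normL2_ge0.
  have D0 : 0 <= Dl by exact: normL2_ge0.
  have n0 : 0 <= n by exact: normL2_ge0.
  have Lrv : L2 mu (fun x => rP x - v x).
    have -> : (fun x => rP x - v x) = (fun x => -1 * v x + rP x) by apply/funext => x; ring.
    exact: L2_lin.
  have h2 : `|B| <= beta * n * Y.
    apply: (le_trans csT); apply: ler_wpM2r => //.
  have h4 : `|B| <= X * Y by exact: (CSn mu mGs (Int_L2X mu mGs LrP) (Int_L2X mu mGs Lv) (Int_L2M mu mGs LrP Lv)).
  have h1 : `|X ^+ 2 - B| <= X * Dl.
    have := CSn mu mGs (Int_L2X mu mGs LrP) (Int_L2X mu mGs Lrv) (Int_L2M mu mGs LrP Lrv).
    rewrite normL2_sq /B -RintegralB //; try exact: Int_L2M; try exact: Int_L2X.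
    by rewrite (@eq_Rintegral _ _ _ mu Gs (fun x => rP x ^+ 2 - rP x * v x) (fun x => rP x * (rP x - v x))) // => x _; ring.
  have h3 : Dl ^+ 2 = X ^+ 2 - 2 * B + Y ^+ 2.
    rewrite !normL2_sq /B.
    rewrite (@eq_Rintegral _ _ _ mu Gs (fun x => -2 * (rP x * v x) + (rP x ^+ 2 + v x ^+ 2))); last by move=> x _; ring.
    rewrite Rint_lin //; first (rewrite RintegralD //; try exact: Int_L2X); try exact: Int_L2M.
      by ring.
    have := Int_lin mu 1 mGs (Int_L2X mu mGs LrP) (Int_L2X mu mGs Lv).
    by apply: eq_integrable => // x _ /=; rewrite mul1r.
  have h1' : X ^+ 2 - B <= X * Dl by apply: le_trans h1; exact: ler_norm.
  have h2' : B <= beta * n * Y by apply: le_trans h2; exact: ler_norm.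
  have h4' : B <= X * Y by apply: le_trans h4; exact: ler_norm.
  have YX : Y <= X + Dl.
    rewrite leNgt; apply/negP => lt.
    have l1 : Dl * Dl < (Y - X) * (Y - X).
      by apply: ltr_pM => //; lra.
    have : (Y - X) * (Y - X) <= Dl ^+ 2.
      rewrite h3; lra.
    rewrite expr2; lra.
  set E := beta * n in h2' *.
  have E0 : 0 <= E by apply: mulr_ge0 => //; exact: ltW.
  rewrite leNgt; apply/negP => lt.
  have l1 : X * (E + 2 * Dl) < X * X.
    by rewrite ltr_pM2l //; lra.
  have l2 : E * Y <= E * (X + Dl) by exact: ler_wpM2l.
  have l3 : (E + 2 * Dl) * Dl <= X * Dl by apply: ler_wpM2r => //; lra.
  have l4 : 0 <= Dl * Dl by exact: mulr_ge0.
  have : X * X <= X * Dl + E * Y by rewrite -expr2; lra.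
  lra.
Qed.
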